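(* Let $f\colon\prod_{i\in[n]}X_i\to Y$ satisfy condition (BC), and let $\varphi_k\colon X_k\to Y$ ($k\in[n]$) be maps satisfying the boundary condition. The following are equivalent: (i) $\Phi_k^-\le\varphi_k\le\Phi_k^+$ (pointwise) for all $k\in[n]$; (ii) $f(\mathbf{x})=p_0(\varphi_1(x_1),\ldots,\varphi_n(x_n))$ for all $\mathbf{x}$, where $p_0(y_1,\ldots,y_n)=\bigvee_{I\subseteq[n]}\big(f(\widehat{\mathbf{1}}_I)\wedge\bigwedge_{i\in I}y_i\big)$; (iii) there exists a polynomial function $p\colon Y^n\to Y$ such that $f(\mathbf{x})=p(\varphi_1(x_1),\ldots,\varphi_n(x_n))$ for all $\mathbf{x}$.
   Context: $Y$ is a finite distributive lattice identified with a sublattice of $\mathcal{P}(U)$ for a finite set $U$, with least element $0=\emptyset$, greatest element $1=U$, and $\wedge,\vee$ being intersection and union; $\overline{S}=U\setminus S$. For $S\subseteq U$, $\operatorname{cl}(S)=\bigwedge\{y\in Y: y\ge S\}$, $\operatorname{int}(S)=\bigvee\{y\in Y: y\le S\}$. $[n]=\{1,\ldots,n\}$; $X_1,\ldots,X_n$ are arbitrary sets with at least two elements, each with two fixed distinct elements $0_{X_k},1_{X_k}$ (written $0,1$). For $\mathbf{x}\in\prod_i X_i$ and $a\in X_k$, $\mathbf{x}_k^a$ is $\mathbf{x}$ with $k$-th component replaced by $a$. For $I\subseteq[n]$, $\widehat{\mathbf{1}}_I$ is the tuple whose $i$-th component is $1_{X_i}$ if $i\in I$ and $0_{X_i}$ otherwise;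 an empty meet equals $1$. A map $\varphi_k\colon X_k\to Y$ satisfies the boundary condition if $\varphi_k(0_{X_k})\le\varphi_k(x_k)\le\varphi_k(1_{X_k})$ for all $x_k$. A polynomial function $Y^n\to Y$ is a composition of $\wedge,\vee$ with variables and constants. Condition (BC): $f(\mathbf{x}_k^0)\le f(\mathbf{x})\le f(\mathbf{x}_k^1)$ for all $k\in[n]$ and all $\mathbf{x}$. For $k\in[n]$, $a_k\in X_k$: $$\Phi_k^-(a_k)=\bigvee_{\mathbf{x}:\,x_k=a_k}\operatorname{cl}\big(f(\mathbf{x})\wedge\overline{f(\mathbf{x}_k^0)}\big),\qquad \Phi_k^+(a_k)=\bigwedge_{\mathbf{x}:\,x_k=a_k}\operatorname{int}\big(f(\mathbf{x})\vee\overline{f(\mathbf{x}_k^1)}\big),$$ ranging over all $\mathbf{x}$ with $k$-th component $a_k$. *)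

(* Defs.v *)
From mathcomp Require Import all_boot.
From Stdlib Require Import ClassicalEpsilon.
Set Implicit Arguments.
Unset Strict Implicit.
Unset Printing Implicit Defensive.

(* Classical boolean reflection of a proposition (used to form subsets of U
   described by possibly infinitary conditions). *)
Definition pbool (P : Prop) : bool :=
  if excluded_middle_informative P then true else false.

Section Lat.
Variable U : finType.
(* Y : the finite distributive lattice, a sublattice of P(U) *)
Definition is_sublattice (Y : {set {set U}}) : Prop :=
  [/\ set0 \in Y, setT \in Y,
      (forall a b, a \in Y -> b \in Y -> a :&: b \in Y)
    & (forall a b, a \in Y -> b \in Y -> a :|: b \in Y)].

Definition cl (Y : {set {set U}}) (S : {set U}) : {set U} :=
  \bigcap_(y in Y | S \subset y) y.
Definition int (Y : {set {set U}}) (S : {set U}) : {set U} :=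
  \bigcup_(y in Y | y \subset S) y.
End Lat.

Section Fun.
Variables (U : finType) (n : nat) (X : 'I_n -> Type).

Definition upd (x : forall i, X i) (k : 'I_n) (a : X k) : forall i, X i :=
  dfwith x a.

Definition hat1 (z o : forall i, X i) (I : {set 'I_n}) : forall i, X i :=
  fun i => if i \in I then o i else z i.

Definition BC (z o : forall i, X i) (f : (forall i, X i) -> {set U}) : Prop :=
  forall k x, f (upd x (z k)) \subset f x /\ f x \subset f (upd x (o k)).

Definition Phi_minus (Y : {set {set U}}) (z : forall i, X i)
  (f : (forall i, X i) -> {set U}) (k : 'I_n) (a : X k) : {set U} :=
  [set u | pbool (exists x : forall i, X i,
      x k = a /\ u \in cl Y (f x :&: ~: f (upd x (z k))))].

(* Phi_k^+ (a) : meet (intersection, empty meet = U) over all x with x_k = a *)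
Definition Phi_plus (Y : {set {set U}}) (o : forall i, X i)
  (f : (forall i, X i) -> {set U}) (k : 'I_n) (a : X k) : {set U} :=
  [set u | pbool (forall x : forall i, X i,
      x k = a -> u \in int Y (f x :|: ~: f (upd x (o k))))].

Definition p0 (z o : forall i, X i) (f : (forall i, X i) -> {set U})
  (y : 'I_n -> {set U}) : {set U} :=
  \bigcup_(I : {set 'I_n}) (f (hat1 z o I) :&: \bigcap_(i in I) y i).
End Fun.

Inductive lpoly (U : finType) (n : nat) : Type :=
| PVar of 'I_n
| PConst of {set U}
| PMeet of lpoly U n & lpoly U n
| PJoin of lpoly U n & lpoly U n.

Fixpoint lp_eval (U : finType) (n : nat) (p : lpoly U n)
  (y : 'I_n -> {set U}) : {set U} :=
  match p with
  | PVar i => y i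
  | PConst c => c
  | PMeet p q => lp_eval p y :&: lp_eval q y
  | PJoin p q => lp_eval p y :|: lp_eval q y
  end.

Fixpoint lp_consts_in (U : finType) (n : nat) (Y : {set {set U}})
  (p : lpoly U n) : Prop :=
  match p with
  | PVar _ => True
  | PConst c => c \in Y
  | PMeet p q => lp_consts_in Y p /\ lp_consts_in Y q
  | PJoin p q => lp_consts_in Y p /\ lp_consts_in Y q
  end.

Definition polynomial_function (U : finType) (n : nat) (Y : {set {set U}})
  (p : ('I_n -> {set U}) -> {set U}) : Prop :=
  exists t : lpoly U n, lp_consts_in Y t /\
    forall y : 'I_n -> {set U}, (forall i, y i \in Y) -> p y = lp_eval t y.

(* Main.v *)
Require Import Defs.
From mathcomp Require Import all_boot.
From Stdlib Require Import FunctionalExtensionality ClassicalEpsilon.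

Lemma pboolP (P : Prop) : reflect P (pbool P).
Proof. rewrite /pbool; case: excluded_middle_informative => h; by constructor. Qed.

Section H.
Variables (U : finType) (n : nat) (X : 'I_n -> Type) (z o : forall i, X i)
  (f : (forall i, X i) -> {set U}) (phi : forall k, X k -> {set U}).

Lemma upd_eq (w : forall i, X i) k (a : X k) (g : forall i, X i) :
  g k = a -> (forall i, k != i -> g i = w i) -> upd w a = g.
Proof.
move=> gk go; apply: functional_extensionality_dep => i; rewrite /upd.
by case: dfwithP => [|j ne]; [rewrite gk | rewrite go].
Qed.

Lemma funeq (b1 b2 : 'I_n -> bool) (x y : forall i, X i) :
  (forall i, b1 i = b2 i) ->
  (fun i => if b1 i then x i else y i) = (fun i => if b2 i then x i else y i).
Proof. by move=> E; apply: functional_extensionality_dep => i; rewrite E. Qed.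

Hypothesis Pm : forall k w u, u \in f w -> u \notin f (upd w (k:=k) (z k)) -> u \in phi k (w k).
Hypothesis Pp : forall k w u, u \in phi k (w k) -> u \in f (upd w (k:=k) (o k)) -> u \in f w.

Lemma lemA x u : u \in f x ->
  u \in f (hat1 z x [set i | u \in phi i (x i)]).
Proof.
move=> ux; set I := [set i | u \in phi i (x i)].
suff H : forall s : seq 'I_n, u \in f (fun i => if (i \in I) || (i \notin s) then x i else z i).
  have := H (enum 'I_n); rewrite /hat1.
  by rewrite (@funeq _ (fun i => i \in I) _ _) // => i; rewrite mem_enum orbF.
elim=> [|k s IH].
  by rewrite (_ : (fun i => _) = x) //; apply: functional_extensionality_dep => i; rewrite orbT.
case: (boolP ((k \in I) || (k \in s))) => H.
  rewrite (@funeq _ (fun i => (i \in I) || (i \notin s)) _ _) // => i.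
  rewrite in_cons negb_or; case: eqVneq => [->|] //=.
  by case: (k \in I) H => //= ->.
move: H; rewrite negb_or => /andP [kI ks].
set w := (fun i => if (i \in I) || (i \notin s) then x i else z i) in IH.
have E : upd w (k:=k) (z k) = (fun i => if (i \in I) || (i \notin k :: s) then x i else z i).
  apply: upd_eq.
    by rewrite in_cons eqxx /= (negbTE kI).
  by move=> i ki; rewrite /w in_cons eq_sym (negbTE ki).
rewrite -E; case: (boolP (u \in f (upd w (k:=k) (z k)))) => // Hn.
have := @Pm k w u IH Hn; rewrite -/w; rewrite /w (negbTE kI) ks /= => uk.
by move: kI; rewrite inE uk.
Qed.

Lemma lemB x u I : u \in f (hat1 z o I) -> (forall i, i \in I -> u \in phi i (x i)) ->
  u \in f (hat1 z x I).
Proof.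
move=> u1 uI.
suff H : forall s : seq 'I_n, u \in f (fun i => if i \in I then (if i \in s then x i else o i) else z i).
  have := H (enum 'I_n); rewrite /hat1.
  by rewrite (_ : (fun i => _) = (fun i => if i \in I then x i else z i)) //;
    apply: functional_extensionality_dep => i; rewrite mem_enum.
elim=> [|k s IH] //.
case: (boolP ((k \notin I) || (k \in s))) => H.
  rewrite (_ : (fun i => _) = (fun i => if i \in I then (if i \in s then x i else o i) else z i)) //.
  apply: functional_extensionality_dep => i; rewrite in_cons.
  case: eqVneq => [->|] //=; case: (boolP (k \in I)) H => //= _ ->.
  by case: (k \in s).
move: H; rewrite negb_or negbK => /andP [kI ks].
set w := (fun i => if i \in I then (if i \in k :: s then x i else o i) else z i).
have E : upd w (k:=k) (o k) = (fun i => if i \in I then (if i \in s then x i else o i) else z i).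
  apply: upd_eq.
    by rewrite kI (negbTE ks).
  by move=> i ki; rewrite /w in_cons eq_sym (negbTE ki).
apply: (@Pp k w u); last by rewrite E.
by rewrite /w kI in_cons eqxx; apply: uI.
Qed.

Hypothesis bc : BC z o f.

Lemma lemC x I : f (hat1 z x I) \subset f x.
Proof.
suff H : forall s : seq 'I_n, f (hat1 z x I) \subset f (fun i => if (i \in I) || (i \in s) then x i else z i).
  have := H (enum 'I_n).
  by rewrite (_ : (fun i => _) = x) //; apply: functional_extensionality_dep => i; rewrite mem_enum orbT.
elim=> [|k s IH].
  by rewrite /hat1 (@funeq (fun i => (i \in I) || (i \in [::])) (fun i => i \in I)) // => i; rewrite orbF.
apply: (subset_trans IH).
case: (boolP ((k \in I) || (k \in s))) => H.
  rewrite (@funeq _ (fun i => (i \in I) || (i \in k :: s)) _ _) // => i.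
  rewrite in_cons; case: eqVneq => [->|] //=.
  by case: (k \in I) H => //= ->.
move: H; rewrite negb_or => /andP [kI ks].
set w := (fun i => if (i \in I) || (i \in k :: s) then x i else z i).
have E : upd w (k:=k) (z k) = (fun i => if (i \in I) || (i \in s) then x i else z i).
  apply: upd_eq.
    by rewrite (negbTE kI) (negbTE ks).
  by move=> i ki; rewrite /w in_cons eq_sym (negbTE ki).
by rewrite -E; case: (bc k w).
Qed.

Lemma lemD x I : f (hat1 z x I) \subset f (hat1 z o I).
Proof.
suff H : forall s : seq 'I_n, f (hat1 z x I) \subset f (fun i => if i \in I then (if i \in s then o i else x i) else z i).
  have := H (enum 'I_n); rewrite /hat1.
  by rewrite (_ : (fun i => if i \in I then (if i \in enum 'I_n then o i else x i) else z i) = (fun i => if i \in I then o i else z i)) //;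
    apply: functional_extensionality_dep => i; rewrite mem_enum.
elim=> [|k s IH] //.
apply: (subset_trans IH).
case: (boolP ((k \notin I) || (k \in s))) => H.
  rewrite (_ : (fun i => _) = (fun i => if i \in I then (if i \in k :: s then o i else x i) else z i)) //.
  apply: functional_extensionality_dep => i; rewrite in_cons.
  case: eqVneq => [->|] //=; case: (boolP (k \in I)) H => //= _ ->.
  by case: (k \in s).
move: H; rewrite negb_or negbK => /andP [kI ks].
set w := (fun i => if i \in I then (if i \in s then o i else x i) else z i).
have E : upd w (k:=k) (o k) = (fun i => if i \in I then (if i \in k :: s then o i else x i) else z i).
  apply: upd_eq.
    by rewrite kI in_cons eqxx.
  by move=> i ki; rewrite /w in_cons eq_sym (negbTE ki).
by rewrite -E; case: (bc k w).
Qed.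

End H.

Lemma lp_mono (U : finType) n (t : lpoly U n) (u : U) (y1 y2 : 'I_n -> {set U}) :
  (forall i, u \in y1 i -> u \in y2 i) -> u \in lp_eval t y1 -> u \in lp_eval t y2.
Proof.
move=> H; elim: t => [i|c|p IHp q IHq|p IHp q IHq] /=; first exact: H; first done.
  by rewrite !inE => /andP [/IHp -> /IHq ->].
by rewrite !inE => /orP [/IHp -> | /IHq ->]; rewrite ?orbT.
Qed.

Section T.
Variables (U : finType) (n : nat).

Definition mterm (I : {set 'I_n}) (s : seq 'I_n) : lpoly U n :=
  foldr (fun i t => if i \in I then @PMeet U n (@PVar U n i) t else t) (@PConst U n setT) s.

Lemma mtermE I s y : lp_eval (mterm I s) y = \bigcap_(i <- s | i \in I) y i.
Proof.
elim: s => [|i s IH]; first by rewrite big_nil.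
by rewrite big_cons /=; case: (i \in I) => //=; rewrite IH.
Qed.

Variable (g : {set 'I_n} -> {set U}).
Definition jterm (s : seq {set 'I_n}) : lpoly U n :=
  foldr (fun I t => @PJoin U n (@PMeet U n (@PConst U n (g I)) (mterm I (index_enum _))) t) (@PConst U n set0) s.

Lemma jtermE s y : lp_eval (jterm s) y =
  \bigcup_(I <- s) (g I :&: \bigcap_(i in I) y i).
Proof.
elim: s => [|I s IH]; first by rewrite big_nil.
by rewrite big_cons /= IH mtermE.
Qed.

Lemma jterm_in (Y : {set {set U}}) s : set0 \in Y -> setT \in Y -> (forall I, g I \in Y) ->
  lp_consts_in Y (jterm s).
Proof.
move=> h0 hT hg; elim: s => [|I s IH] //=; split=> //; split=> //.
by elim: (index_enum _) => [|i r IHr] //=; case: (i \in I).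
Qed.
End T.

Theorem mainTheorem7 (U : finType) (Y : {set {set U}}) (n : nat)
  (X : 'I_n -> Type) (z o : forall i, X i)
  (f : (forall i, X i) -> {set U}) (phi : forall k, X k -> {set U}) :
  is_sublattice Y ->
  (forall i, z i <> o i) ->
  (forall x, f x \in Y) ->
  (forall k a, phi k a \in Y) ->
  BC z o f ->
  (forall k a, phi k (z k) \subset phi k a /\ phi k a \subset phi k (o k)) ->
  [/\ ((forall k a, Phi_minus Y z f a \subset phi k a /\
                    phi k a \subset Phi_plus Y o f a) <->
       (forall x, f x = p0 z o f (fun i => phi i (x i)))),
      ((forall x, f x = p0 z o f (fun i => phi i (x i))) <->
       (exists p, polynomial_function Y p /\
          forall x, f x = p (fun i => phi i (x i))))
    & ((exists p, polynomial_function Y p /\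
          forall x, f x = p (fun i => phi i (x i))) <->
       (forall k a, Phi_minus Y z f a \subset phi k a /\
                    phi k a \subset Phi_plus Y o f a))].
Proof.
move=> [Y0 YT _ _] _ fY phiY bc bnd.
have i_ii : (forall k a, Phi_minus Y z f a \subset phi k a /\
                    phi k a \subset Phi_plus Y o f a) ->
       (forall x, f x = p0 z o f (fun i => phi i (x i))).
  move=> Hi x.
  have Pm : forall k w u, u \in f w -> u \notin f (upd w (k:=k) (z k)) -> u \in phi k (w k).
    move=> k w u uw un; have [H _] := Hi k (w k); apply: (subsetP H).
    rewrite inE; apply/pboolP; exists w; split => //.
    rewrite /cl; apply/bigcapP => y /andP [_ sub]; apply: (subsetP sub).
    by rewrite !inE uw un.
  have Pp : forall k w u, u \in phi k (w k) -> u \in f (upd w (k:=k) (o k)) -> u \in f w.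
    move=> k w u uphi uo; have [_ H] := Hi k (w k).
    move: (subsetP H _ uphi); rewrite inE => /pboolP /(_ w erefl).
    rewrite /int => /bigcupP [y /andP [_ sub] uy].
    by have := subsetP sub _ uy; rewrite !inE uo orbF.
  apply/setP => u; apply/idP/idP.
    move=> ux; apply/bigcupP; exists [set i | u \in phi i (x i)] => //.
    rewrite inE; apply/andP; split.
      by apply: (subsetP (@lemD _ _ _ z o f bc x _)); apply: (@lemA _ _ _ z f phi Pm x u ux).
    by apply/bigcapP => i; rewrite inE.
  move=> /bigcupP [I _]; rewrite inE => /andP [u1 /bigcapP uI].
  apply: (subsetP (@lemC _ _ _ z o f bc x I)); apply: (@lemB _ _ _ z o f phi Pp x u I u1) => i iI; exact: uI.
have ii_iii : (forall x, f x = p0 z o f (fun i => phi i (x i))) ->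
       (exists p, polynomial_function Y p /\
          forall x, f x = p (fun i => phi i (x i))).
  move=> Hii; exists (p0 z o f); split => //.
  exists (@jterm U n (fun I => f (hat1 z o I)) (index_enum _)); split.
    by apply: jterm_in.
  by move=> y _; rewrite jtermE.
have iii_i : (exists p, polynomial_function Y p /\
          forall x, f x = p (fun i => phi i (x i))) ->
       (forall k a, Phi_minus Y z f a \subset phi k a /\
                    phi k a \subset Phi_plus Y o f a).
  move=> [p [[t [tc tp]] Hp]] k a; have phY : forall x, forall i, phi i (x i) \in Y by [].
  split.
    apply/subsetP => u; rewrite inE => /pboolP [x [xa]]; rewrite /cl => ucl.
    move/bigcapP: ucl => /(_ (phi k a)); apply; rewrite phiY /=.
    apply/subsetP => v; rewrite !inE => /andP [vx vn].
    apply: contraNT vn => nv.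
    rewrite Hp tp //; rewrite Hp tp // in vx; apply: lp_mono vx => i.
    case: (eqVneq k i) => [<-|ne].
      by rewrite xa => vk; rewrite vk in nv.
    by rewrite /upd dfwith_out.
  apply/subsetP => u ua; rewrite inE; apply/pboolP => x xa; rewrite /int.
  apply/bigcupP; exists (phi k a) => //; rewrite phiY /=.
  apply/subsetP => v va; rewrite !inE.
  case: (boolP (v \in f (upd x (k:=k) (o k)))) => [vo|]; last by rewrite orbT.
  rewrite orbF; rewrite Hp tp // in vo; rewrite Hp tp //; apply: lp_mono vo => i.
  case: (eqVneq k i) => [<-|ne].
    by rewrite /upd dfwith_in xa.
  by rewrite /upd dfwith_out.
split; split => //.
all: move=> H; first [ exact: (iii_i (ii_iii H)) | exact: (i_ii (iii_i H)) | exact: (ii_iii (i_ii H)) ].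
Qed.
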